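(* Let $m$ be a positive even integer and $S_\pi$ a positroid cell of $Gr^+_{k+m/2,n}$. If every $V\in S_\pi$ contains a generic $\frac m2$-plane, then the affine permutation of $\pi$ satisfies $\pi(i)\ge i+\frac m2$ for all $i$.
   Context: $Gr^+_{r,n}$: points of the real Grassmannian with all Plücker coordinates $\ge0$, partitioned into positroid cells $S_\pi$ indexed by decorated permutations $\pi_d$ (for $V$ with columns $v_1,\dots,v_n$, $\pi_d(i)$ is the first $j$ cyclically after $i$ with $v_i\in\mathrm{span}(v_{i+1},\dots,v_j)$; a fixed point $i$ is a loop iff $v_i=0$, else a coloop). The affine permutation $\pi:\mathbb{Z}\to\mathbb{Z}$ has $\pi(i+n)=\pi(i)+n$ and for $i\in[n]$: $\pi(i)=\pi_d(i)$ if $\pi_d(i)>i$, $\pi_d(i)+n$ if $\pi_d(i)<i$, $i$ if $i$ is a loop, $i+n$ if $i$ is a coloop. A point $\lambda\in Gr_{m/2,n}$ is generic if all its Plücker coordinates are nonzero; $V$ contains $\lambda$ if $\lambda\subseteq V$. *)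

(* Defs.v *)
From HB Require Import structures.
From mathcomp Require Import all_boot all_order all_algebra.
Set Implicit Arguments. Unset Strict Implicit. Unset Printing Implicit Defensive.
Import Order.TTheory GRing.Theory Num.Theory.
Local Open Scope ring_scope.

(* A point of Gr_{r,n} is represented by a full-rank r x n matrix M;
   the point is its row space, and the columns of M are v_0, ..., v_{n-1}
   (0-based indexing of [n]). *)

Section Grass.
Variable R : realFieldType.

(* strictly increasing index maps 'I_r -> 'I_n, i.e. r-subsets of [n] *)
Definition incr_idx (r n : nat) (f : 'I_r -> 'I_n) : Prop :=
  forall a b : 'I_r, (a < b)%N -> (f a < f b)%N.

Definition in_Gr (r n : nat) (M : 'M[R]_(r, n)) : Prop := \rank M = r.

Definition plucker (r n : nat) (M : 'M[R]_(r, n)) (f : 'I_r -> 'I_n) : R :=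
  \det (colsub f M).

Definition in_TNNGr (r n : nat) (M : 'M[R]_(r, n)) : Prop :=
  in_Gr M /\ forall f : 'I_r -> 'I_n, incr_idx f -> 0 <= plucker M f.

Definition generic (r n : nat) (L : 'M[R]_(r, n)) : Prop :=
  forall f : 'I_r -> 'I_n, incr_idx f -> plucker L f != 0.

Definition colv (r n : nat) (M : 'M[R]_(r, n)) (i : 'I_n) : 'rV[R]_r :=
  \row_a M a i.

Definition cyc (n : nat) (i : 'I_n) (s : nat) : 'I_n :=
  Ordinal (ltn_pmod (i + s) (leq_ltn_trans (leq0n i) (ltn_ord i))).

Definition span_after (r n : nat) (M : 'M[R]_(r, n)) (i : 'I_n) (t : nat)
  : 'M[R]_(t, r) :=
  \matrix_(s < t, a < r) M a (cyc i s.+1).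

Definition in_span_after (r n : nat) (M : 'M[R]_(r, n)) (i : 'I_n) (t : nat)
  : bool := (colv M i <= span_after M i t)%MS.

(* offset t in {0,..,n} of the first j = i + t (cyclically, starting at j = i
   with the empty span) with v_i in span(v_{i+1},...,v_j) *)
Definition first_offset (r n : nat) (M : 'M[R]_(r, n)) (i : 'I_n) : nat :=
  find (in_span_after M i) (iota 0 n.+1).

Definition dperm (r n : nat) (M : 'M[R]_(r, n)) (i : 'I_n) : nat :=
  (i + first_offset M i) %% n.

(* a fixed point i is a loop iff v_i = 0 (otherwise a coloop) *)
Definition is_loop (r n : nat) (M : 'M[R]_(r, n)) (i : 'I_n) : bool :=
  colv M i == 0.

(* W and V lie in the same positroid cell: same decorated permutation *)
Definition same_cell (r n : nat) (W V : 'M[R]_(r, n)) : Prop :=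
  forall i : 'I_n, dperm W i = dperm V i /\
    (dperm V i = i -> is_loop W i = is_loop V i).

Definition affperm_ord (r n : nat) (M : 'M[R]_(r, n)) (i : 'I_n) : nat :=
  if (i < dperm M i)%N then dperm M i
  else if (dperm M i < i)%N then (dperm M i + n)%N
  else if is_loop M i then nat_of_ord i else (i + n)%N.

Definition affperm (r n : nat) (M : 'M[R]_(r, n)) (i : int) : int :=
  match n as n0 return 'M[R]_(r, n0) -> int with
  | 0%N => fun _ => i
  | n'.+1 => fun M' =>
      (affperm_ord M' (inord `|(i %% n'.+1)%Z|%N))%:Z + (i %/ n'.+1)%Z * n'.+1%:Z
  end M.

End Grass.

(* Main.v *)
Require Import Defs.
From HB Require Import structures.
From mathcomp Require Import all_boot all_order all_algebra.
From mathcomp Require Import zify.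
Set Implicit Arguments. Unset Strict Implicit. Unset Printing Implicit Defensive.
Import Order.TTheory GRing.Theory Num.Theory.
Local Open Scope ring_scope.

Lemma cyc_neq n (i : 'I_n) s : (0 < s < n)%N -> cyc i s != i.
Proof.
move=> hs; apply/negP => /eqP/(congr1 val) /=.
have hi := ltn_ord i.
case: (ltnP (i + s) n) => h.
  rewrite modn_small //; lia.
have -> : (i + s = (i + s - n) + n)%N by lia.
rewrite modnDr modn_small; lia.
Qed.

Lemma cyc0 n (i : 'I_n) : cyc i 0 = i.
Proof. by apply: val_inj => /=; rewrite addn0 modn_small. Qed.
Lemma enum_sorted_ord n (T : {set 'I_n}) :
  sorted (fun x y : 'I_n => (x < y)%N) (enum T).
Proof.
rewrite -deprecated_filter_index_enum.
apply: sorted_filter; first by move=> x y z; apply: ltn_trans.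
have := iota_ltn_sorted 0 n; rewrite -val_enum_ord sorted_map.
by rewrite /index_enum -enumT.
Qed.

Lemma exists_superset (T : finType) (A : {set T}) k :
  (#|A| <= k <= #|T|)%N -> exists B : {set T}, A \subset B /\ #|B| = k.
Proof.
move=> /andP[hA hT].
move: {2}(k - #|A|)%N (erefl (k - #|A|)%N) => d.
elim: d A hA => [|d IH] A hA hd.
  exists A; split=> //; apply/eqP; rewrite eqn_leq hA /=; lia.
have [x xA] : exists x, x \notin A.
  apply/existsP; rewrite -negb_forall; apply/negP => /forallP hx.
  have: A = setT by apply/setP=> y; rewrite inE hx.
  move=> eA; move: hA hT hd; rewrite eA cardsT; lia.
have := IH (x |: A); rewrite cardsU1 xA /= => /(_ _ _).
case; [lia|lia|] => B [sB cB]; exists B; split=> //.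
by apply: subset_trans sB; apply: subsetUr.
Qed.

Lemma key (R : realFieldType) n h (L : 'M[R]_(h, n)) (i : 'I_n) t :
  generic L -> (0 < h)%N -> (h <= n)%N -> (t < h)%N -> in_span_after L i t -> False.
Proof.
move=> gL h0 hn th hsp.
pose S := [set cyc i (val s) | s : 'I_t.+1].
have cS : (#|S| <= h)%N.
  apply: leq_trans (leq_imset_card _ _) _; rewrite ?cardsT ?cardT ?size_enum_ord ?card_ord; lia.
have [T [sST cT]] : exists T : {set 'I_n}, S \subset T /\ #|T| = h.
  by apply: exists_superset; rewrite cS card_ord.
have hsz : size (enum T) = h by rewrite -cardE.
pose f (a : 'I_h) : 'I_n := nth i (enum T) a.
have finc : incr_idx f.
  move=> a b ab; rewrite /f.
  apply: (sorted_ltn_nth (leT := fun x y : 'I_n => (x < y)%N)) => //.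
  - by move=> x y z; apply: ltn_trans.
  - exact: enum_sorted_ord.
  - by rewrite inE hsz.
  - by rewrite inE hsz.
have fsurj : forall j, j \in T -> exists b, f b = j.
  move=> j jT.
  have hj : (index j (enum T) < h)%N by rewrite -hsz index_mem mem_enum.
  exists (Ordinal hj); by rewrite /f /= nth_index // mem_enum.
have iT : i \in T.
  apply: (subsetP sST); apply/imsetP; exists ord0 => //=; by rewrite cyc0.
have [i' fi'] := fsurj i iT.
pose X := (colsub f L)^T.
have rX : \rank X = h.
  rewrite mxrank_tr mxrank_unit // unitmxE unitfE; exact: gL.
have rowX : forall b, row b X = colv L (f b).
  by move=> b; apply/rowP => a; rewrite !mxE.
have Hrow : forall j, j \in T -> j != i -> (colv L j <= row' i' X)%MS.
  move=> j jT ji; have [b fb] := fsurj j jT.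
  have bi : i' != b by apply/eqP => eib; move: ji; rewrite -fb -eib fi' eqxx.
  rewrite -fb -rowX.
  have [k -> _] := unlift_some bi.
  have -> : row (lift i' k) X = row k (row' i' X) by apply/rowP => a; rewrite !mxE.
  exact: row_sub.
have sub : (X <= row' i' X)%MS.
  apply/row_subP => b; rewrite rowX.
  have [->|bi] := eqVneq b i'.
    rewrite fi'; apply: submx_trans hsp _; apply/row_subP => s.
    have -> : row s (span_after L i t) = colv L (cyc i s.+1).
      by apply/rowP => a; rewrite !mxE.
    apply: Hrow.
      apply: (subsetP sST); apply/imsetP.
      have hs : (s.+1 < t.+1)%N by rewrite ltnS.
      by exists (Ordinal hs).
    apply: cyc_neq; have := ltn_ord s; lia.
  apply: Hrow; first by rewrite /f -mem_enum mem_nth // hsz.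
  rewrite -fi'; apply: contra_neq bi => fbi; apply: val_inj; apply/eqP.
  by move: fbi; rewrite /f => /eqP; rewrite nth_uniq ?hsz ?enum_uniq.
have := mxrankS sub; rewrite rX => /leq_trans/(_ (rank_leq_row _)); lia.
Qed.

Section Aff.
Variable R : realFieldType.

Lemma span_transfer r h n (V : 'M[R]_(r, n)) (D : 'M[R]_(h, r)) i t :
  in_span_after V i t -> in_span_after (D *m V) i t.
Proof.
rewrite /in_span_after => hs.
have -> : colv (D *m V) i = colv V i *m D^T.
  by apply/rowP => b; rewrite !mxE; apply: eq_bigr => c _; rewrite !mxE mulrC.
have -> : span_after (D *m V) i t = span_after V i t *m D^T.
  by apply/matrixP => s b; rewrite !mxE; apply: eq_bigr => c _; rewrite !mxE mulrC.
exact: submxMr.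
Qed.

Lemma span_n r n (M : 'M[R]_(r, n)) (i : 'I_n) : in_span_after M i n.
Proof.
have hn : (n.-1 < n)%N by have := ltn_ord i; lia.
rewrite /in_span_after.
have -> : colv M i = row (Ordinal hn) (span_after M i n).
  apply/rowP => a; rewrite !mxE; congr (M a _); apply: val_inj => /=.
  have -> : (n.-1.+1 = n)%N by have := ltn_ord i; lia.
  by rewrite modnDr modn_small.
exact: row_sub.
Qed.

Lemma fo_le r n (M : 'M[R]_(r, n)) (i : 'I_n) : (first_offset M i <= n)%N.
Proof.
have : has (in_span_after M i) (iota 0 n.+1).
  apply/hasP; exists n; last exact: span_n.
  by rewrite mem_iota; lia.
by rewrite has_find size_iota /first_offset.
Qed.

Lemma fo_span r n (M : 'M[R]_(r, n)) (i : 'I_n) : in_span_after M i (first_offset M i).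
Proof.
have hh : has (in_span_after M i) (iota 0 n.+1).
  apply/hasP; exists n; last exact: span_n.
  by rewrite mem_iota; lia.
have := nth_find 0 hh; rewrite nth_iota ?add0n //.
by move: hh; rewrite has_find size_iota.
Qed.

Lemma fo_loop r n (M : 'M[R]_(r, n)) (i : 'I_n) : is_loop M i -> first_offset M i = 0%N.
Proof.
move=> /eqP hl; rewrite /first_offset /=.
by rewrite {1}/in_span_after hl sub0mx.
Qed.

Lemma aff_ge r n (M : 'M[R]_(r, n)) (i : 'I_n) :
  (i + first_offset M i <= affperm_ord M i)%N.
Proof.
have hl := @fo_loop r n M i; have hle := fo_le M i.
have hi := ltn_ord i.
move: hl hle; rewrite /affperm_ord /dperm.
set t := first_offset M i => hl hle.
have [hs|hs] := ltnP (i + t) n.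
  rewrite (modn_small hs).
  case: ltnP => // h1; case: ltnP => h2; first lia.
  case: ifP => [/hl|]; lia.
have -> : (i + t = (i + t - n) + n)%N by lia.
rewrite modnDr modn_small; last lia.
case: ltnP => h1; first lia.
case: ltnP => h2; first lia.
case: ifP => [/hl|]; lia.
Qed.
End Aff.

Theorem lemma5p6 (R : realFieldType) (k m n : nat) :
  (0 < m)%N -> ~~ odd m ->
  forall V : 'M[R]_(k + m./2, n),
    in_TNNGr V ->
    (forall W : 'M[R]_(k + m./2, n), in_TNNGr W -> same_cell W V ->
       exists L : 'M[R]_(m./2, n), [/\ in_Gr L, generic L & (L <= W)%MS]) ->
    forall i : int, i + (m./2)%:Z <= affperm V i.
Proof.
move=> m0 mev V hV hyp i.
have h0 : (0 < m./2)%N.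
  move: m0; rewrite -[m in (0 < m)%N]odd_double_half (negbTE mev) add0n.
  by case: (m./2).
have [L [rL gL sL]] := hyp V hV (fun j => conj erefl (fun _ => erefl)).
have hn : (m./2 <= n)%N by rewrite -{1}rL rank_leq_col.
have [D eL] := submxP sL.
have fo : forall j : 'I_n, (m./2 <= first_offset V j)%N.
  move=> j; rewrite leqNgt; apply/negP => ht.
  apply: (key gL h0 hn ht); rewrite eL; exact/span_transfer/fo_span.
move: hn V hV hyp fo {sL D eL}; case: n L rL gL => [|N] L rL gL hn; first lia.
move=> V hV hyp fo /=.
set j := inord _.
have hj : (nat_of_ord j)%:Z = (i %% N.+1)%Z.
  rewrite /j inordK.
    by rewrite gez0_abs // modz_ge0.
  by rewrite -ltz_nat gez0_abs ?modz_ge0 // ltz_pmod.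
have ha := aff_ge V j; have hf := fo j.
have hi := divz_eq i N.+1%:Z.
have hh : ((nat_of_ord j + m./2)%:Z <= (affperm_ord V j)%:Z).
  by rewrite lez_nat; apply: leq_trans ha; rewrite leq_add2l.
move: hh; rewrite PoszD hj => hh.
rewrite {1}hi -addrA [X in _ <= X]addrC lerD2l; exact: hh.
Qed.
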